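(* In the polyhedral environment, when agents have subadditive valuations, the pure Price of Anarchy of the proportional allocation mechanism is exactly $2$: for every instance and every pure Nash equilibrium $\mathbf{b}$, $\sum_iv_i(x_i(\mathbf{b}))\ge\frac12\sum_iv_i(o_i)$, where $\mathbf{o}$ is an optimal feasible allocation; and for every $\delta>0$ there is an instance with subadditive valuations and a pure Nash equilibrium whose social welfare is at most $\frac{1}{2-\delta}$ times the optimal social welfare.
   Context: Polyhedral environment: there are $n$ agents and $m$ resources, and a non-negative $m\times n$ matrix $A=(a_{ji})$, written $a_{ij}$ for the entry corresponding to agent $i$ and resource $j$ (each agent has at least one $j$ with $a_{ij}>0$). An allocation is a vector $\mathbf{x}=(x_1,\dots,x_n)$ of non-negative scalars, feasible if $A\mathbf{x}\le\mathbf{1}$ componentwise. Agent $i$ has a valuation $v_i:\mathbb{R}_{\ge0}\to\mathbb{R}_{\ge0}$ of her single-parameter allocation that is monotone non-decreasing and subadditive ($v_i(x+y)\le v_i(x)+v_i(y)$). Proportional allocation mechanism: each agent $i$ bids $b_{ij}\ge0$ on each resource $j$, receives $x_i(\mathbf{b})=\min_{j:a_{ij}>0}\frac{b_{ij}}{a_{ij}\sum_{k}b_{kj}}$ and pays $\sum_jb_{ij}$; utility $u_i=v_i(x_i)-\sum_jb_{ij}$. Social welfare is $\sum_iv_i(x_i)$. A pure Nash equilibrium is a bid profile $\mathbf{b}$ such that no agent can increase her utility by unilaterally changing her bids. *)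

(* Defs.v *)
From HB Require Import structures.
From mathcomp Require Import all_boot all_order all_algebra.
From mathcomp Require Import reals.
Set Implicit Arguments. Unset Strict Implicit. Unset Printing Implicit Defensive.
Import Order.TTheory GRing.Theory Num.Theory.
Local Open Scope ring_scope.

Section Polyhedral.
Variable R : realType.
Variables n m : nat.

Definition subadditive_valuation (f : R -> R) : Prop :=
  [/\ (forall x, 0 <= x -> 0 <= f x),
      (forall x y, 0 <= x -> x <= y -> f x <= f y) &
      (forall x y, 0 <= x -> 0 <= y -> f (x + y) <= f x + f y)].

Definition valid_instance (a : 'I_n -> 'I_m -> R) (v : 'I_n -> R -> R) : Prop :=
  [/\ (forall i j, 0 <= a i j),
      (forall i, exists j, 0 < a i j) &
      (forall i, subadditive_valuation (v i))].

(* x_i(b) = min_{j : a_ij > 0} b_ij / (a_ij * sum_k b_kj)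
   (with the MathComp convention y / 0 = 0). *)
Definition share (a : 'I_n -> 'I_m -> R) (b : 'I_n -> 'I_m -> R)
  (i : 'I_n) (j : 'I_m) : R :=
  b i j / (a i j * \sum_(k < n) b k j).

Definition alloc (a : 'I_n -> 'I_m -> R) (b : 'I_n -> 'I_m -> R)
  (i : 'I_n) : R :=
  if [pick j | 0 < a i j] is Some j0 then
    \big[Order.min/share a b i j0]_(j | 0 < a i j) share a b i j
  else 0.

Definition payment (b : 'I_n -> 'I_m -> R) (i : 'I_n) : R :=
  \sum_(j < m) b i j.

Definition utility (a : 'I_n -> 'I_m -> R) (v : 'I_n -> R -> R)
  (b : 'I_n -> 'I_m -> R) (i : 'I_n) : R :=
  v i (alloc a b i) - payment b i.

Definition deviate (b : 'I_n -> 'I_m -> R) (i : 'I_n) (bi : 'I_m -> R)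
  : 'I_n -> 'I_m -> R :=
  fun k j => if k == i then bi j else b k j.

Definition nonneg_bids (b : 'I_n -> 'I_m -> R) : Prop :=
  forall i j, 0 <= b i j.

Definition pure_nash (a : 'I_n -> 'I_m -> R) (v : 'I_n -> R -> R)
  (b : 'I_n -> 'I_m -> R) : Prop :=
  nonneg_bids b /\
  forall (i : 'I_n) (bi : 'I_m -> R), (forall j, 0 <= bi j) ->
    utility a v (deviate b i bi) i <= utility a v b i.

Definition social_welfare (a : 'I_n -> 'I_m -> R) (v : 'I_n -> R -> R)
  (b : 'I_n -> 'I_m -> R) : R :=
  \sum_(i < n) v i (alloc a b i).

Definition feasible (a : 'I_n -> 'I_m -> R) (o : 'I_n -> R) : Prop :=
  (forall i, 0 <= o i) /\ (forall j, \sum_(i < n) a i j * o i <= 1).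

Definition welfare_of (v : 'I_n -> R -> R) (o : 'I_n -> R) : R :=
  \sum_(i < n) v i (o i).

End Polyhedral.

(* Main.v *)
Require Import Defs.
From HB Require Import structures.
From mathcomp Require Import all_boot all_order all_algebra.
From mathcomp Require Import reals.
From mathcomp Require Import ring lra.
Import Order.TTheory GRing.Theory Num.Theory.
Local Open Scope ring_scope.

Lemma alloc_ge (R : realType) n m (a b : 'I_n -> 'I_m -> R) i (c : R) :
  (exists j, 0 < a i j) -> (forall j, 0 < a i j -> c <= share a b i j) ->
  c <= alloc a b i.
Proof.
move=> [j Hj] H; rewrite /alloc; case: pickP => [j0 Hj0|Hn]; last first.
  by move: (Hn j); rewrite Hj.
apply: (big_ind (fun y => c <= y)); first exact: H.
  by move=> x y hx hy; rewrite le_min hx hy.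
by move=> k hk; apply: H.
Qed.

Lemma pay_dev (R : realType) n m (b : 'I_n -> 'I_m -> R) i bi :
  payment (deviate b i bi) i = \sum_j bi j.
Proof. by apply: eq_bigr => j _; rewrite /deviate eqxx. Qed.

Lemma sum_dev (R : realType) n m (b : 'I_n -> 'I_m -> R) i bi j :
  \sum_k deviate b i bi k j = bi j + \sum_(k | k != i) b k j.
Proof.
rewrite (bigD1 i) //= /deviate eqxx; congr (_ + _).
by apply: eq_bigr => k /negbTE ->.
Qed.

Lemma part1 (R : realType) (n m : nat) (a : 'I_n -> 'I_m -> R) (v : 'I_n -> R -> R)
          (b : 'I_n -> 'I_m -> R) (o : 'I_n -> R) :
     valid_instance a v -> pure_nash a v b -> feasible a o ->
     welfare_of v o / 2 <= social_welfare a v b.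
Proof.
move=> [ha hpos hv] [hb hdev] [ho hcol].
set B := fun j => \sum_k b k j.
have hB : forall j, 0 <= B j by move=> j; apply: sumr_ge0 => k _; apply: hb.
have key : forall e, 0 < e ->
   welfare_of v o / 2 <= social_welfare a v b + m%:R * e.
  move=> e he.
  pose dev i := fun j => a i j * o i * (B j + e).
  have hdev0 : forall i j, 0 <= dev i j.
    move=> i j; rewrite /dev; apply: mulr_ge0; first exact: mulr_ge0.
    by apply: addr_ge0 => //; apply: ltW.
  have hao : forall i j, a i j * o i <= 1.
    move=> i j; apply: le_trans (hcol j).
    rewrite (bigD1 i) //= lerDl; apply: sumr_ge0 => k _; exact: mulr_ge0.
  have c1 : forall i, v i (o i) / 2 <= v i (alloc a (deviate b i (dev i)) i).
    move=> i; have [hv0 hvm hvs] := hv i.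
    have h2 : v i (o i) / 2 <= v i (o i / 2).
      have := hvs (o i / 2) (o i / 2).
      have ho2 : 0 <= o i / 2 by apply: divr_ge0.
      move=> /(_ ho2 ho2); rewrite -splitr => h; lra.
    apply: le_trans h2 _; apply: hvm; first by apply: divr_ge0.
    apply: alloc_ge; first exact: hpos.
    move=> j hj; rewrite /share sum_dev /deviate eqxx.
    set S := \sum_(k | k != i) b k j.
    have hS0 : 0 <= S by apply: sumr_ge0 => k _; apply: hb.
    have hSB : S <= B j.
      by rewrite /B (bigD1 i) //= -/S lerDr; apply: hb.
    have [hoz|hop] := eqVneq (o i) 0.
      rewrite hoz mul0r; apply: divr_ge0; first exact: hdev0.
      apply: mulr_ge0; first exact: ha.
      by apply: addr_ge0 => //; apply: hdev0.
    have hop' : 0 < o i by rewrite lt_def hop ho.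
    have hp : 0 < a i j * o i by apply: mulr_gt0.
    have hp1 := hao i j.
    rewrite /dev; set p := a i j * o i.
    have hX : 0 < B j + e by apply: ltr_wpDl.
    set X := B j + e.
    rewrite ler_pdivlMr; last first.
      by apply: mulr_gt0 => //; apply: ltr_wpDr => //; apply: mulr_gt0.
    have -> : o i / 2 * (a i j * (p * X + S)) = p / 2 * (p * X + S) by rewrite /p; ring.
    have h4 : p * X <= X by rewrite ler_piMl // ltW.
    have h5 : S <= X by rewrite /X; lra.
    have h3 : p * X + S <= 2 * X by lra.
    have h6 : p / 2 * (p * X + S) <= p / 2 * (2 * X).
      by apply: ler_wpM2l => //; apply: divr_ge0 => //; apply: ltW.
    apply: le_trans h6 _; rewrite mulrA divfK //; lra.
  have c2 : forall i, v i (o i) / 2 - \sum_j dev i j <=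
                      v i (alloc a b i) - payment b i.
    move=> i; apply: le_trans (hdev i (dev i) (hdev0 i)).
    by rewrite /utility pay_dev lerD2r.
  have c3 : \sum_i \sum_j dev i j <= \sum_j B j + m%:R * e.
    rewrite exchange_big /=.
    have -> : m%:R * e = \sum_(j < m) e by rewrite sumr_const card_ord mulr_natl.
    rewrite -big_split /=; apply: ler_sum => j _.
    rewrite /dev; under eq_bigr => i _ do rewrite mulrC.
    rewrite -mulr_sumr mulrC; apply: ler_piMl; first by apply: addr_ge0 => //; apply: ltW.
    exact: hcol.
  have c4 : \sum_i payment b i = \sum_j B j.
    by rewrite /payment /B exchange_big.
  have := ler_sum (index_enum 'I_n) (fun i _ => c2 i).
  move/(_ xpredT); rewrite !sumrB c4 /social_welfare /welfare_of mulr_suml.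
  lra.
apply/ler_addgt0Pr => e he.
have hm : 0 < (m.+1)%:R :> R by rewrite ltr0n.
apply: le_trans (key (e / (m.+1)%:R) (divr_gt0 he hm)) _.
rewrite lerD2l mulrA ler_pdivrMr // [m%:R * e]mulrC ler_wpM2l ?(ltW he) // ler_nat //.
Qed.

Lemma alloc1 (R : realType) n (a b : 'I_n -> 'I_1 -> R) i :
  0 < a i ord0 -> alloc a b i = share a b i ord0.
Proof.
move=> h; rewrite /alloc; case: pickP => [j _|H]; last by move: (H ord0); rewrite h.
apply: (big_ind (fun y => y = share a b i ord0)).
- by rewrite (ord1 j).
- by move=> x y -> ->; exact: minxx.
- by move=> k _; rewrite (ord1 k).
Qed.

Lemma step_val (R : realType) :
  subadditive_valuation (fun x : R => 1 + (if 1 <= x then 1 else 0)).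
Proof.
split.
- by move=> x _; case: ifP => _; lra.
- move=> x y _ hxy; case: (lerP 1 x) => h1; case: (lerP 1 y) => h2 //; lra.
- move=> x y _ _; case: ifP => _; case: ifP => _; case: ifP => _; lra.
Qed.

Lemma lin_val (R : realType) (c : R) : 0 < c -> subadditive_valuation (fun x : R => c * x).
Proof.
move=> hc; split.
- by move=> x hx; apply: mulr_ge0 => //; apply: ltW.
- by move=> x y _ hxy; rewrite ler_wpM2l // ltW.
- by move=> x y _ _; rewrite mulrDr.
Qed.

Lemma part2 (R : realType) (delta : R) : 0 < delta ->
     exists (n m : nat) (a : 'I_n -> 'I_m -> R) (v : 'I_n -> R -> R)
            (b : 'I_n -> 'I_m -> R) (o : 'I_n -> R),
       [/\ valid_instance a v, pure_nash a v b, feasible a o,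
           0 < social_welfare a v b &
           (2 - delta) * social_welfare a v b <= welfare_of v o].
Proof.
move=> hd.
set c := delta / 2.
have hc : 0 < c by apply: divr_gt0.
pose a := fun (_ : 'I_3) (_ : 'I_1) => (1 : R).
pose v := fun (i : 'I_3) (x : R) =>
  if i == ord0 then 1 + (if 1 <= x then 1 else 0) else c * x.
pose b := fun (i : 'I_3) (_ : 'I_1) => if i == ord0 then 0 else c / 4.
pose o := fun (i : 'I_3) => if i == ord0 then (1 : R) else 0.
have ha : forall i, 0 < a i ord0 by move=> i; exact: ltr01.
have hsum : \sum_k b k ord0 = c / 2.
  rewrite !big_ord_recl big_ord0 /b /=; lra.
have hall : forall i, alloc a b i = b i ord0 / (c / 2).
  by move=> i; rewrite alloc1 // /share hsum mul1r.
have hSW : social_welfare a v b = 1 + c.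
  rewrite /social_welfare !big_ord_recl big_ord0 !hall /v /b /= mul0r ler10.
  have -> : c / 4 / (c / 2) = 1 / 2 by field; lra.
  lra.
exists 3%N, 1%N, a, v, b, o; split.
- split; first by move=> i j; exact: ler01.
    by move=> i; exists ord0; exact: ltr01.
  move=> i; rewrite /v; case: eqP => _; [exact: step_val | exact: lin_val].
- split.
    by move=> i j; rewrite /b; case: eqP => _ //; apply: divr_ge0; [apply: ltW|].
  move=> i bi hbi.
  rewrite /utility !pay_dev alloc1 // alloc1 // /share sum_dev /deviate eqxx.
  rewrite /payment !big_ord1 hsum /a !mul1r.
  have hS : b i ord0 + \sum_(k | k != i) b k ord0 = c / 2.
    by rewrite -hsum [RHS](bigD1 i).
  move: hS; set S := \sum_(k | k != i) b k ord0 => hS.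
  set t := bi ord0; have ht : 0 <= t := hbi ord0.
  rewrite /v /b in hS *; case: eqP => hi.
    rewrite hi eqxx add0r in hS; rewrite hS mul0r ler10.
    have hlt : t / (t + c / 2) < 1.
      rewrite ltr_pdivrMr; [rewrite mul1r ltrDl; exact: divr_gt0 | exact: ltr_wpDl ht (divr_gt0 hc _)].
    rewrite (lt_geF hlt) /=; lra.
  move/eqP/negbTE: hi => hne; rewrite hne in hS.
  have hS' : S = c / 4 by lra.
  rewrite hS' -/(c / 4).
  have hq : 0 < c / 4 by apply: divr_gt0.
  have -> : c * (c / 4 / (c / 2)) = c / 2 by field; lra.
  have -> : c / 2 - c / 4 = c / 4 by field.
  move: hq; set q := c / 4 => hq.
  have hcq : c = 4 * q by rewrite /q; field.
  have htq : 0 < t + q by lra.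
  suff : c * t / (t + q) <= t + q by rewrite mulrA; lra.
  rewrite ler_pdivrMr // hcq.
  have := sqr_ge0 (t - q); nra.
- split; first by move=> i; rewrite /o; case: eqP.
  by move=> j; rewrite !big_ord_recl big_ord0 /a /o /=; lra.
- rewrite hSW; lra.
- rewrite hSW /welfare_of !big_ord_recl big_ord0 /v /o /= lexx mulr0 /c; nra.
Qed.

Theorem theorem8 (R : realType) :
  (forall (n m : nat) (a : 'I_n -> 'I_m -> R) (v : 'I_n -> R -> R)
          (b : 'I_n -> 'I_m -> R) (o : 'I_n -> R),
     valid_instance a v -> pure_nash a v b -> feasible a o ->
     welfare_of v o / 2 <= social_welfare a v b)
  /\
  (forall delta : R, 0 < delta ->
     exists (n m : nat) (a : 'I_n -> 'I_m -> R) (v : 'I_n -> R -> R)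
            (b : 'I_n -> 'I_m -> R) (o : 'I_n -> R),
       [/\ valid_instance a v, pure_nash a v b, feasible a o,
           0 < social_welfare a v b &
           (2 - delta) * social_welfare a v b <= welfare_of v o]).
Proof. split; [exact: part1 | exact: part2]. Qed.
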